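(* Let $\rho>0$ and $n\in\mathbb{Z}_+$. For the ancestral chain started at $(n,0,1)$ with $s(0)=0$, $\mathbb{P}_{n,0,1,0}[s(\tau)=0]=\prod_{i=1}^n\frac{i(i+1)}{i(i+1)+\rho}$, where $\tau=\inf\{s\ge0:(a(s),b(s),c(s))\in\{(0,0,1),(1,1,0)\}\}$ (the empty product being $1$).
   Context: The ancestral chain $(a(t),b(t),c(t))$ with parameter $\rho$ is the continuous-time Markov chain on $\mathbb{Z}_+^3\setminus\{\mathbf 0\}$ which from $(a,b,c)$ jumps to $(a+1,b+1,c-1)$ at rate $c\rho/2$ (a recombination event), to $(a-1,b-1,c+1)$ at rate $ab$, to $(a-1,b,c)$ at rate $ac+a(a-1)/2$, to $(a,b-1,c)$ at rate $bc+b(b-1)/2$, and to $(a,b,c-1)$ at rate $c(c-1)/2$. $s(t)$ is the number of recombination jumps in $(0,t)$. *)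

(* Defs.v *)
From HB Require Import structures.
From mathcomp Require Import all_boot all_order all_algebra.
From mathcomp Require Import reals ereal sequences.
Set Implicit Arguments. Unset Strict Implicit. Unset Printing Implicit Defensive.
Import Order.TTheory GRing.Theory Num.Theory.
Local Open Scope ring_scope.

Definition state := (nat * nat * nat)%type.

Inductive move := Recomb | Mix | CoalA | CoalB | CoalC.

Definition isRecomb (m : move) : bool := if m is Recomb then true else false.

Definition all_moves : seq move := [:: Recomb; Mix; CoalA; CoalB; CoalC].

(* The target state of a jump (nat subtraction is only used where the
   corresponding rate vanishes if the coordinate is 0). *)
Definition step (x : state) (m : move) : state :=
  let: (a, b, c) := x in
  match m with
  | Recomb => (a.+1, b.+1, c.-1)
  | Mix => (a.-1, b.-1, c.+1)
  | CoalA => (a.-1, b, c)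
  | CoalB => (a, b.-1, c)
  | CoalC => (a, b, c.-1)
  end.

Definition rate {R : realType} (rho : R) (x : state) (m : move) : R :=
  let: (a, b, c) := x in
  let a' := a%:R in let b' := b%:R in let c' := c%:R in
  match m with
  | Recomb => c' * rho / 2
  | Mix => a' * b'
  | CoalA => a' * c' + a' * (a' - 1) / 2
  | CoalB => b' * c' + b' * (b' - 1) / 2
  | CoalC => c' * (c' - 1) / 2
  end.

Definition total_rate {R : realType} (rho : R) (x : state) : R :=
  \sum_(m <- all_moves) rate rho x m.

Definition jump_prob {R : realType} (rho : R) (x : state) (m : move) : R :=
  rate rho x m / total_rate rho x.

(* Probability (under the jump chain started at x) of the cylinder event that
   the first jumps are exactly the moves ms. *)
Fixpoint path_weight {R : realType} (rho : R) (x : state) (ms : seq move) : R :=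
  match ms with
  | [::] => 1
  | m :: ms' => jump_prob rho x m * path_weight rho (step x m) ms'
  end.

Definition target (x : state) : bool :=
  (x == (0, 0, 1)%N) || (x == (1, 1, 0)%N).

(* The path of ms from x first hits the target exactly at its last state
   (i.e. tau is the time of the last jump of ms, or 0 if ms is empty). *)
Definition first_hit (x : state) (ms : seq move) : bool :=
  let sts := scanl step x ms in
  ~~ has target (belast x sts) && target (last x sts).

Fixpoint all_paths (k : nat) : seq (seq move) :=
  match k with
  | 0 => [:: [::]]
  | k'.+1 => [seq m :: ms | m <- all_moves, ms <- all_paths k']
  end.

(* P_{x, s=0}[ tau < oo and s(tau) = 0 ]: the sum, over the disjoint cylinder
   events determined by the jump sequence up to time tau, of those with no
   recombination jump (s(tau) = number of Recomb jumps up to tau). *)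
Definition prob_no_recomb_before_tau {R : realType} (rho : R) (x : state)
  : \bar R :=
  (\sum_(0 <= k <oo)
     (\sum_(ms <- all_paths k | first_hit x ms && (count isRecomb ms == 0%N))
        path_weight rho x ms)%:E)%E.

(* Main.v *)
Require Import Defs.
From HB Require Import structures.
From mathcomp Require Import all_boot all_order all_algebra.
From mathcomp Require Import reals ereal sequences topology normedtype.
From mathcomp Require Import ring lra.
Import Order.TTheory GRing.Theory Num.Theory.
Local Open Scope ring_scope.

Section S.
Variable (R : realType) (rho : R) (hrho : 0 < rho).

Definition P (a : nat) : R := \prod_(1 <= i < a.+1) ((i * i.+1)%:R / ((i * i.+1)%:R + rho)).

Lemma first_hit_nil x : first_hit x [::] = target x.
Proof. by rewrite /first_hit /=. Qed.

Lemma first_hit_cons x m ms : first_hit x (m :: ms) = ~~ target x && first_hit (step x m) ms.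
Proof. by rewrite /first_hit /= negb_or andbA. Qed.

Lemma Sk k : forall a, \sum_(ms <- all_paths k | first_hit (a,0,1)%N ms && (count isRecomb ms == 0%N))
   path_weight rho (a,0,1)%N ms = if k == a then P a else 0.
Proof.
elim: k => [|k IH] a.
  rewrite /= big_mkcond big_seq1 first_hit_nil /= /target.
  case: a => [|a] /=; first by rewrite /P big_geq.
  by rewrite !xpair_eqE /= andbF.
rewrite big_mkcond.
change (all_paths k.+1) with [seq m :: ms | m <- all_moves, ms <- all_paths k].
rewrite big_allpairs_dep /= !big_cons big_nil.
have ZM : jump_prob rho (a,0,1)%N Mix = 0.
  by rewrite /jump_prob /rate /= mulr0 mul0r.
have ZB : jump_prob rho (a,0,1)%N CoalB = 0.
  by rewrite /jump_prob /rate /= !mul0r add0r mul0r.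
have ZC : jump_prob rho (a,0,1)%N CoalC = 0.
  by rewrite /jump_prob /rate /= subrr !mulr0 mul0r mul0r.
rewrite big1 ?add0r; last by move=> ms _; rewrite /= andbF.
rewrite big1 ?add0r; last by move=> ms _; rewrite ZM mul0r; case: ifP.
rewrite [X in _ + (X + _)]big1 ?add0r; last by move=> ms _; rewrite ZB mul0r; case: ifP.
rewrite [X in _ + (X + _)]big1 ?addr0 ?add0r; last by move=> ms _; rewrite ZC mul0r; case: ifP.
case: a ZM ZB ZC => [|a] _ _ _.
  by rewrite big1 // => ms _; rewrite first_hit_cons /target eqxx.
have -> : \sum_(i2 <- all_paths k)
     (if first_hit (a.+1, 0%N, 1%N) (CoalA :: i2) &&
       ((isRecomb CoalA + count isRecomb i2)%N == 0%N)
      then jump_prob rho (a.+1, 0%N, 1%N) CoalA * path_weight rho (a.+1.-1, 0%N, 1%N) i2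
      else 0) = jump_prob rho (a.+1, 0%N, 1%N) CoalA *
     \sum_(i2 <- all_paths k | first_hit (a, 0%N, 1%N) i2 && (count isRecomb i2 == 0%N))
        path_weight rho (a, 0%N, 1%N) i2.
  rewrite big_distrr [in RHS]big_mkcond /=; apply: eq_bigr => ms _.
  rewrite first_hit_cons /target !xpair_eqE /= andbF.
  by case: ifP; rewrite ?mulr0.
rewrite IH eqSS; case: eqP => _; last by rewrite mulr0.
rewrite /P [in RHS]big_nat_recr //= mulrC; congr (_ * _).
rewrite /jump_prob /total_rate /rate /= !big_cons big_nil /=.
rewrite natrM -[a.+2]addn1 natrD.
have h1 : 0 < 1 + a%:R :> R by rewrite addrC natr1 ltr0n.
by field; rewrite gt_eqF // addr_gt0 // mulr_gt0 // addr_gt0.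

Qed.
End S.

Theorem mainTheorem10 (R : realType) (rho : R) (n : nat) (hrho : 0 < rho) :
  prob_no_recomb_before_tau rho (n, 0, 1)%N =
  (\prod_(1 <= i < n.+1) ((i * i.+1)%:R / ((i * i.+1)%:R + rho)))%:E.
Proof.
rewrite /prob_no_recomb_before_tau.
apply: lim_near_cst => //.
near=> N.
rewrite (eq_bigr (fun k => (if k == n then @P R rho n else 0)%:E)); last by move=> k _; congr EFin; exact: Sk.
rewrite sumEFin -big_mkcond big_nat1_eq /=.
have -> : (n < N)%N by near: N; exists n.+1.
by [].
Unshelve. all: by end_near.
Qed.
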